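(* $\mathcal{S}pl$ is not a $\Pi^{0}_{4}$ subset of $2^{2^{<\omega}}$ (identified with the Cantor space via characteristic functions).
   Context: For an infinite $A\subseteq\omega$, let $S(A)$ be the set of all $\sigma\in2^{<\omega}$ such that $\sigma$ is constant on $A\cap\mathrm{dom}(\sigma)$. The splitting ideal $\mathcal{S}pl$ is the ideal on $2^{<\omega}$ generated by the sets $S(A)$, $A\in[\omega]^{\omega}$. *)

(* Defs.v *)
From mathcomp Require Import all_boot.
Set Implicit Arguments. Unset Strict Implicit. Unset Printing Implicit Defensive.

Definition binseq := seq bool.

Definition Cantor := binseq -> bool.

Definition infinite_nat (A : nat -> bool) : Prop := forall n, exists m, n <= m /\ A m.

Definition S_of (A : nat -> bool) (sigma : binseq) : Prop :=
  forall i j, i < size sigma -> j < size sigma -> A i -> A j ->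
    nth false sigma i = nth false sigma j.

(* The splitting ideal: the ideal generated by the S(A), A infinite, i.e. the sets
   contained in a finite union of such S(A). *)
Definition Spl (X : Cantor) : Prop :=
  exists (n : nat) (A : nat -> nat -> bool),
    (forall k, k < n -> infinite_nat (A k)) /\
    forall sigma, X sigma -> exists k, k < n /\ S_of (A k) sigma.

Definition cantor_open (U : Cantor -> Prop) : Prop :=
  forall x, U x -> exists F : seq binseq,
    forall y, (forall s, s \in F -> y s = x s) -> U y.

(* Borel hierarchy: Sigma n U means U is Sigma^0_n (n >= 1); Sigma 0 is empty. *)
Fixpoint Sigma0 (n : nat) (U : Cantor -> Prop) : Prop :=
  match n with
  | 0 => False
  | 1 => cantor_open U
  | S ((S _) as k) =>
      exists f : nat -> Cantor -> Prop,
        (forall i, Sigma0 k (fun x => ~ f i x)) /\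
        (forall x, U x <-> exists i, f i x)
  end.

Definition Pi0 (n : nat) (U : Cantor -> Prop) : Prop := Sigma0 n (fun x => ~ U x).

(* Main.v *)
Require Import Defs.
From mathcomp Require Import all_boot zify.
From Stdlib Require Import Classical ClassicalEpsilon FunctionalExtensionality.
Set Implicit Arguments. Unset Strict Implicit. Unset Printing Implicit Defensive.

Definition dep T (F : seq binseq) (f : Cantor -> T) :=
  forall x y, (forall s, s \in F -> x s = y s) -> f x = f y.
Definition cont T (f : Cantor -> T) := exists F, dep F f.

Lemma cont_const T (c : T) : cont (fun _ => c).
Proof. by exists [::]. Qed.
Lemma cont_app s : cont (fun x => x s).
Proof. exists [:: s] => x y H; apply: H; exact: mem_head. Qed.
Lemma cont2 A B C (h : A -> B -> C) f g : cont f -> cont g -> cont (fun x => h (f x) (g x)).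
Proof.
move=> [F HF] [G HG]; exists (F ++ G) => x y H.
rewrite (HF x y) ?(HG x y) // => s Hs; apply: H; by rewrite mem_cat Hs ?orbT.
Qed.
Lemma cont1 A B (h : A -> B) f : cont f -> cont (fun x => h (f x)).
Proof. move=> [F HF]; exists F => x y H; by rewrite (HF x y). Qed.
Lemma cont_ext T (f g : Cantor -> T) : (forall x, f x = g x) -> cont f -> cont g.
Proof. move=> E [F HF]; exists F => x y H; by rewrite -!E (HF x y). Qed.
Lemma cont_map A B (P : Cantor -> A -> B) s :
  (forall e, cont (fun x => P x e)) -> cont (fun x => map (P x) s).
Proof.
move=> H; elim: s => [|e s IH] /=; first exact: cont_const.
exact: (cont2 cons (H e) IH).
Qed.
Lemma cont_has A (P : Cantor -> A -> bool) s :
  (forall e, cont (fun x => P x e)) -> cont (fun x => has (P x) s).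
Proof.
move=> H; apply: (cont_ext (f := fun x => has id (map (P x) s))).
  by move=> x; rewrite has_map.
exact: cont1 (cont_map _ H).
Qed.
Lemma cont_all A (P : Cantor -> A -> bool) s :
  (forall e, cont (fun x => P x e)) -> cont (fun x => all (P x) s).
Proof.
move=> H; apply: (cont_ext (f := fun x => all id (map (P x) s))).
  by move=> x; rewrite all_map.
exact: cont1 (cont_map _ H).
Qed.
Lemma cont_find A (P : Cantor -> A -> bool) s :
  (forall e, cont (fun x => P x e)) -> cont (fun x => find (P x) s).
Proof.
move=> H; apply: (cont_ext (f := fun x => find id (map (P x) s))).
  by move=> x; rewrite find_map.
exact: cont1 (cont_map _ H).
Qed.

Lemma Sigma0_ext n U V : Sigma0 n U -> (forall x, U x <-> V x) -> Sigma0 n V.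
Proof.
case: n => [//|[|k]] /=.
  move=> HU E x /E Vx; have [F HF] := HU x Vx.
  exists F => y /HF; exact: (proj1 (E y)).
move=> [f [Hf E1]] E; exists f; split => // x; rewrite -E; exact: E1.
Qed.

Lemma Sigma0_pull (R : Cantor -> Cantor) :
  (forall s, cont (fun x => R x s)) ->
  forall n V, Sigma0 n V -> Sigma0 n (fun x => V (R x)).
Proof.
move=> HR.
have [Ff HFf] : {Ff : binseq -> seq binseq | forall s, dep (Ff s) (fun x => R x s)}.
  exists (fun s => proj1_sig (constructive_indefinite_description _ (HR s))).
  move=> s; exact: proj2_sig (constructive_indefinite_description _ (HR s)).
elim=> [//|n IH] V; case: n IH => [|k] IH /=.
  move=> HV x Vx; have [F HF] := HV _ Vx.
  exists (flatten (map Ff F)) => y Hy; apply: HF => s Hs.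
  apply: (HFf s y x) => t Ht; apply: Hy.
  apply/flattenP; exists (Ff s) => //; exact: map_f.
move=> [f [Hf E]]; exists (fun i x => f i (R x)); split.
  move=> i; exact: (IH (fun z => ~ f i z) (Hf i)).
move=> x; exact: E.
Qed.

Definition code (i : nat) (s : binseq) : binseq := nseq i true ++ false :: s.
Definition sub (a : Cantor) (i : nat) : Cantor := fun s => a (code i s).
Definition glue (af : nat -> Cantor) : Cantor := fun s =>
  let i := index false s in if i < size s then af i (drop i.+1 s) else false.

Lemma sub_glue af i s : sub (glue af) i s = af i s.
Proof.
rewrite /sub /glue /code.
have Hi : index false (nseq i true ++ false :: s) = i.
  rewrite index_cat.
  have -> : (false \in nseq i true) = false by elim: i => //.
  by rewrite size_nseq /= addn0.
rewrite Hi size_cat size_nseq /= ifT; last by rewrite addnS ltnS leq_addr.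
congr (af i _); clear Hi; elim: i => [|i IH] //=; by rewrite drop0.
Qed.

Definition nbhd (l : nat) (x : Cantor) : bool :=
  if @unpickle (seq (binseq * bool)) l is Some F then all (fun p => x p.1 == p.2) F else false.

Definition U1 (d x : Cantor) : Prop := exists l, d (nseq l true) /\ nbhd l x.

Fixpoint U (n : nat) (a x : Cantor) : Prop :=
  match n with
  | 0 => False
  | 1 => U1 a x
  | S ((S _) as k) => exists i, ~ U k (sub a i) x
  end.

Definition dec (P : Prop) : bool := if excluded_middle_informative P then true else false.
Lemma decP (P : Prop) : dec P <-> P.
Proof. by rewrite /dec; case: excluded_middle_informative. Qed.

Lemma universal n V : Sigma0 n.+1 V -> exists a, forall x, V x <-> U n.+1 a x.
Proof.
elim: n V => [|k IH] V /=.
  move=> HV; exists (fun s => dec (forall y, nbhd (size s) y -> V y)) => x; split.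
    move=> Vx; have [F HF] := HV x Vx.
    exists (pickle [seq (s, x s) | s <- F]); split.
      apply/decP => y; rewrite size_nseq /nbhd pickleK => /allP Hy.
      apply: HF => s Hs; apply/eqP; exact: (Hy (s, x s) (map_f _ Hs)).
    rewrite /nbhd pickleK; apply/allP => p /mapP [s _ ->] /=; exact: eqxx.
  move=> [l [/decP H Hn]]; apply: H; by rewrite size_nseq.
move=> [f [Hf E]].
have H : forall i, exists a, forall x, ~ f i x <-> U k.+1 a x by move=> i; exact: IH (Hf i).
have [af Haf] : {af : nat -> Cantor | forall i x, ~ f i x <-> U k.+1 (af i) x}.
  exists (fun i => proj1_sig (constructive_indefinite_description _ (H i))).
  move=> i; exact: proj2_sig (constructive_indefinite_description _ (H i)).
exists (glue af) => x; rewrite E; split.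
  move=> [i Hi]; exists i.
  have -> : sub (glue af) i = af i by apply: functional_extensionality => s; exact: sub_glue.
  move=> Hu; apply: (proj2 (Haf i x) Hu); exact: Hi.
move=> [i Hi]; exists i; apply: NNPP => Hn; apply: Hi; have := proj1 (Haf i x) Hn.
have -> : sub (glue af) i = af i by apply: functional_extensionality => s; exact: sub_glue.
exact.
Qed.


Definition bx (a x : Cantor) (i j k l : nat) : bool :=
  sub (sub (sub a i) j) k (nseq l true) && nbhd l x.

Lemma U4E a x : U 4 a x <-> exists i, forall j, exists k, forall l, ~~ bx a x i j k l.
Proof.
rewrite /=; split.
  move=> [i Hi]; exists i => j; apply: NNPP => Hj; apply: Hi; exists j => [[k Hk]].
  apply: Hj; exists k => l; apply/negP => /andP [H1 H2]; apply: Hk; by exists l.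
move=> [i Hi]; exists i => [[j Hj]]; apply: Hj; have [k Hk] := Hi j.
exists k => [[l [H1 H2]]]; move: (Hk l); by rewrite /bx H1 H2.
Qed.

Lemma cont_bx i j k l : cont (fun x => bx x x i j k l).
Proof.
apply: (cont2 andb); first exact: cont_app.
rewrite /nbhd; case: unpickle => [F|]; last exact: cont_const.
apply: cont_all => e; exact: (cont1 (fun v => v == e.2) (cont_app e.1)).
Qed.


Section Core.
Variable b : nat -> nat -> nat -> nat -> bool.

Definition gJ (J : seq nat) (L : nat) : nat :=
  find (fun k => has (fun i => all (fun l => ~~ b i (nth 0 J i) k l) (iota 0 L.+1))
                     (iota 0 (size J))) (iota 0 L.+1).

Definition inZg (g : nat) (J : seq nat) (s : binseq) : bool :=
 [&& count (nth false s) (iota 0 (size s)) <= size J,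
     all (fun p => nth false s p ==> (pickle J <= p)) (iota 0 (size s)) &
     all (fun p => all (fun q => (nth false s p && nth false s q) ==> (q - p <= g))
            (iota 0 (size s))) (iota 0 (size s))].

Definition inZ J s := inZg (gJ J (size s)) J s.

Definition Xb (s : binseq) : bool :=
  ~~ has (nth false s) (iota 0 (size s)) ||
  has (fun c => if @unpickle (seq nat) c is Some J then inZ J s else false) (iota 0 (size s)).

Lemma XbP s : Xb s <-> exists J, inZ J s.
Proof.
split.
  case/orP => [Hn|/hasP [c _]].
    exists [::]; rewrite /inZ /inZg /=.
    have E : forall p, p \in iota 0 (size s) -> nth false s p = false.
      by move=> p Hp; apply: negbTE; move/hasPn: Hn; apply.
    apply/and3P; split.
    - by move: Hn; rewrite has_count -leqNgt.
    - by apply/allP => p /E ->.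
    - by apply/allP => p /E -> /=; apply/allP.
  by case: unpickle => // J HJ; exists J.
move=> [J HJ]; apply/orP; case: (boolP (has _ _)) => Hh; [right|by left].
case/hasP: Hh => p Hp Hsp; apply/hasP; exists (pickle J); last by rewrite pickleK.
move: HJ; rewrite /inZ /inZg => /and3P [_ /allP /(_ p Hp) H _].
move: Hp; rewrite !mem_iota /= !add0n => Hp.
rewrite Hsp /= in H; exact: leq_ltn_trans H Hp.
Qed.

Lemma gJ_le J L i0 k : i0 < size J -> (forall l, ~~ b i0 (nth 0 J i0) k l) -> gJ J L <= k.
Proof.
move=> Hi Hk; rewrite /gJ.
case: (leqP k L) => HkL; last first.
  apply: leq_trans (find_size _ _) _; by rewrite size_iota.
rewrite leqNgt; apply/negP => /(before_find 0); rewrite nth_iota // add0n.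
move/negP; apply; apply/hasP; exists i0; first by rewrite mem_iota.
by apply/allP => l _.
Qed.

Lemma gJ_gt J L M : M <= L ->
  (forall k, k <= M -> forall i, i < size J -> exists l, l <= L /\ b i (nth 0 J i) k l) ->
  M < gJ J L.
Proof.
move=> HML H; rewrite ltnNge; apply/negP => Hg.
have Hlt : gJ J L < size (iota 0 L.+1) by rewrite size_iota; apply: leq_ltn_trans Hg _.
have Hhas := Hlt; rewrite -has_find in Hhas.
move: (nth_find 0 Hhas); rewrite -/(gJ J L) nth_iota ?add0n; last by rewrite size_iota in Hlt.
case/hasP => i; rewrite mem_iota add0n => Hi /allP Hall.
have [l [HlL Hb]] := H _ Hg i Hi.
move: (Hall l); rewrite mem_iota add0n ltnS HlL Hb; by move/(_ isT).
Qed.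

End Core.

Lemma S_of_noones (A : nat -> bool) (s : binseq) :
  (forall p, p < size s -> A p -> ~~ nth false s p) -> S_of A s.
Proof.
move=> H i j Hi Hj Ai Aj; by rewrite (negbTE (H _ Hi Ai)) (negbTE (H _ Hj Aj)).
Qed.

Lemma notin_small (r : seq nat) M : size r < M -> exists2 t, t < M & t \notin r.
Proof.
move=> Hs; case: (boolP (all (fun t => t \in r) (iota 0 M))) => Ha.
  have : M <= size r.
    rewrite -{1}(size_iota 0 M); apply: uniq_leq_size; first exact: iota_uniq.
    exact/allP.
  by rewrite leqNgt Hs.
case/allPn: Ha => t; rewrite mem_iota add0n => Ht Hn; by exists t.
Qed.

Fixpoint dseq (h : nat -> nat) (m : nat) : nat :=
  if m is m'.+1 then dseq h m' + h (dseq h m') + 1 else 0.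

Lemma dseq_ge h t : t <= dseq h t.
Proof. elim: t => //= t IH; lia. Qed.

Lemma dseq_step h t t' : t < t' -> dseq h t + h (dseq h t) < dseq h t'.
Proof.
elim: t' => // t' IH; rewrite ltnS leq_eqVlt => /orP [/eqP ->|/IH]; rewrite /=; lia.
Qed.


Definition wJ (i0 : nat) (kf : nat -> nat) (c : nat) : nat :=
  if @unpickle (seq nat) c is Some J then (if i0 < size J then kf (nth 0 J i0) else 0) else 0.
Arguments wJ : simpl never.
Lemma wJ_pickle i0 kf (J : seq nat) : wJ i0 kf (pickle J) = if i0 < size J then kf (nth 0 J i0) else 0.
Proof. by rewrite /wJ pickleK. Qed.

Lemma cover_dir (b : nat -> nat -> nat -> nat -> bool) (i0 : nat) : (forall j, exists k, forall l, ~~ b i0 j k l) -> Spl (Xb b).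
Proof.
move=> H.
have [kf Hkf] : {kf : nat -> nat | forall j l, ~~ b i0 j (kf j) l}.
  exists (fun j => proj1_sig (constructive_indefinite_description _ (H j))).
  move=> j; exact: proj2_sig (constructive_indefinite_description _ (H j)).
pose Hm y := \max_(c < y.+1) wJ i0 kf c.
have HmJ : forall (J : seq nat) p, pickle J <= p -> i0 < size J -> kf (nth 0 J i0) <= Hm p.
  move=> J p Hp Hi; have Hc : pickle J < p.+1 by [].
  apply: leq_trans _ (@leq_bigmax _ (fun c : 'I_p.+1 => wJ i0 kf c) (Ordinal Hc)).
  by rewrite /= wJ_pickle Hi.
pose Aset := fun m => has (fun t => (dseq Hm t == m) && ~~ odd t) (iota 0 m.+1).
pose Bset := fun m => has (fun t => (dseq Hm t == m) && odd t) (iota 0 m.+1).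
pose Cset := fun t m => m %% i0.+1 == t.
have AsetP : forall m, Aset m -> exists2 t, dseq Hm t = m & ~~ odd t.
  move=> m /hasP [t _ /andP [/eqP <- Ht]]; by exists t.
have BsetP : forall m, Bset m -> exists2 t, dseq Hm t = m & odd t.
  move=> m /hasP [t _ /andP [/eqP <- Ht]]; by exists t.
exists i0.+3, (fun k => if k < i0.+1 then Cset k else if k == i0.+1 then Aset else Bset).
split.
  move=> k Hk n; case: ifP => Hk1.
    exists (n * i0.+1 + k); split; first by nia.
    by rewrite /Cset modnMDl modn_small.
  case: ifP => _.
    exists (dseq Hm (n.*2)); split; first by apply: leq_trans (dseq_ge _ _); rewrite -addnn; lia.
    apply/hasP; exists n.*2; last by rewrite eqxx odd_double.
    by rewrite mem_iota add0n ltnS dseq_ge.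
  exists (dseq Hm (n.*2.+1)); split.
    apply: leq_trans (dseq_ge _ _); rewrite -addnn; lia.
  apply/hasP; exists n.*2.+1; last by rewrite eqxx /= odd_double.
  by rewrite mem_iota add0n ltnS dseq_ge.
move=> s /XbP [J]; rewrite /inZ /inZg => /and3P [Hcnt Hpick Hspr].
case: (leqP (size J) i0) => Hs.
  pose r := map (modn^~ i0.+1) (filter (nth false s) (iota 0 (size s))).
  have [t Ht Htr] : exists2 t, t < i0.+1 & t \notin r.
    apply: notin_small; rewrite size_map size_filter ltnS; exact: leq_trans Hcnt Hs.
  exists t; split; first by lia.
  rewrite Ht; apply: S_of_noones => p Hp /eqP Hpt; apply/negP => Hsp.
  move/negP: Htr; apply; rewrite -Hpt; apply: map_f.
  by rewrite mem_filter Hsp mem_iota.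
have HG : gJ b J (size s) <= kf (nth 0 J i0) by apply: gJ_le Hs _.
have Hpk : forall p, p < size s -> nth false s p -> pickle J <= p.
  move=> p Hp Hsp; move/allP: Hpick => /(_ p); rewrite mem_iota add0n Hp Hsp.
  by move/(_ isT).
have Hsp2 : forall p q, p < size s -> q < size s -> nth false s p -> nth false s q ->
    q - p <= kf (nth 0 J i0).
  move=> p q Hp Hq Sp Sq; apply: leq_trans HG.
  move/allP: Hspr => /(_ p); rewrite mem_iota add0n Hp => /(_ isT) /allP /(_ q).
  by rewrite mem_iota add0n Hq Sp Sq => /(_ isT).
have key : forall t t', t < t' -> dseq Hm t < size s -> dseq Hm t' < size s ->
    nth false s (dseq Hm t) -> nth false s (dseq Hm t') -> False.
  move=> t t' Htt Hp Hq Sp Sq.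
  have := dseq_step Hm Htt; have := Hsp2 _ _ Hp Hq Sp Sq.
  have := HmJ J _ (Hpk _ Hp Sp) Hs; lia.
case: (boolP (has (fun p => Aset p && nth false s p) (iota 0 (size s)))) => HA; last first.
  exists i0.+1; split => //; rewrite ltnn eqxx.
  apply: S_of_noones => p Hp Ap; apply/negP => Sp; move/hasPn: HA => /(_ p).
  by rewrite mem_iota add0n Hp Ap Sp => /(_ isT).
exists i0.+2; split => //; rewrite ltnNge leqnSn /= (_ : (i0.+2 == i0.+1) = false); last first.
  by apply/negbTE; rewrite neq_ltn ltnSn orbT.
case/hasP: HA => p; rewrite mem_iota add0n => Hp /andP [/AsetP [t Ht Hto] Sp].
apply: S_of_noones => q Hq /BsetP [t' Ht' Hto'] ; apply/negP => Sq.
case: (ltngtP t t') => Htt.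
- apply: (key t t') => //; by rewrite ?Ht ?Ht'.
- apply: (key t' t) => //; by rewrite ?Ht ?Ht'.
- by move: Hto; rewrite Htt Hto'.
Qed.


Lemma count_mem_le (T : seq nat) (s : seq nat) : uniq s -> count (fun p => p \in T) s <= size T.
Proof.
move=> Us; rewrite -size_filter; apply: leq_trans (size_undup T); apply: uniq_leq_size.
  exact: filter_uniq.
move=> p; rewrite mem_filter mem_undup; by case/andP.
Qed.

Lemma split_dir (b : nat -> nat -> nat -> nat -> bool) : Spl (Xb b) -> exists i, forall j, exists k, forall l, ~~ b i j k l.
Proof.
move=> [n [A [Hinf Hcov]]]; apply: NNPP => Hno.
have H1 : forall i, exists j, forall k, exists l, b i j k l.
  move=> i; apply: NNPP => Hi; apply: Hno; exists i => j; apply: NNPP => Hj; apply: Hi.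
  exists j => k; apply: NNPP => Hk; apply: Hj; exists k => l; apply/negP => Hb.
  apply: Hk; by exists l.
have [jf Hjf] : {jf : nat -> nat | forall i k, exists l, b i (jf i) k l}.
  exists (fun i => proj1_sig (constructive_indefinite_description _ (H1 i))).
  move=> i; exact: proj2_sig (constructive_indefinite_description _ (H1 i)).
have [lf Hlf] : {lf : nat -> nat -> nat | forall i k, b i (jf i) k (lf i k)}.
  exists (fun i k => proj1_sig (constructive_indefinite_description _ (Hjf i k))).
  move=> i k; exact: proj2_sig (constructive_indefinite_description _ (Hjf i k)).
have H2 : forall k m, exists y, m <= y /\ (k < n -> A k y).
  move=> k m; case: (ltnP k n) => Hk.
    have [y [Hy Ay]] := Hinf k Hk m; by exists y.
  by exists m.
have [yf Hyf] : {yf : nat -> nat -> nat | forall k m, m <= yf k m /\ (k < n -> A k (yf k m))}.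
  exists (fun k m => proj1_sig (constructive_indefinite_description _ (H2 k m))).
  move=> k m; exact: proj2_sig (constructive_indefinite_description _ (H2 k m)).
pose J := map jf (iota 0 n).
have sJ : size J = n by rewrite size_map size_iota.
have nJ : forall i, i < n -> nth 0 J i = jf i.
  by move=> i Hi; rewrite (nth_map 0) ?size_iota // nth_iota.
pose t k := yf k (pickle J).
pose M := \max_(k < n) t k.
have HtM : forall k, k < n -> t k <= M.
  move=> k Hk; exact: (@leq_bigmax _ (fun k : 'I_n => t k) (Ordinal Hk)).
pose u k := yf k M.+1.
pose L := (\max_(k < n) u k) + M + (\max_(i < n) \max_(k < M.+1) lf i k) + 1.
have HuL : forall k, k < n -> u k < L.
  move=> k Hk; have := (@leq_bigmax _ (fun k : 'I_n => u k) (Ordinal Hk)); rewrite /L /=; lia.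
have HML : M <= L by rewrite /L; lia.
have HlL : forall i k, i < n -> k <= M -> lf i k <= L.
  move=> i k Hi Hk.
  have h1 := (@leq_bigmax _ (fun k : 'I_M.+1 => lf i k) (Ordinal (Hk : k < M.+1))).
  have h2 := (@leq_bigmax _ (fun i : 'I_n => \max_(k < M.+1) lf i k) (Ordinal Hi)).
  rewrite /L /=; simpl in h1, h2; lia.
pose T := map t (iota 0 n).
pose s := mkseq (fun p => p \in T) L.
have sS : size s = L by rewrite size_mkseq.
have nS : forall p, p < L -> nth false s p = (p \in T).
  by move=> p Hp; rewrite nth_mkseq.
have inT : forall p, p \in T -> exists2 k, k < n & p = t k.
  move=> p /mapP [k]; rewrite mem_iota add0n => Hk ->; by exists k.
have HZ : inZ b J s.
  rewrite /inZ /inZg sS; apply/and3P; split.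
  - rewrite sJ (eq_in_count (a2 := fun p => p \in T)).
      apply: leq_trans (count_mem_le T (iota_uniq 0 L)) _; by rewrite size_map size_iota.
    move=> p; rewrite mem_iota add0n => Hp; exact: nS.
  - apply/allP => p; rewrite mem_iota add0n => Hp; rewrite nS //; apply/implyP.
    move/inT => [k Hk ->]; by have [] := Hyf k (pickle J).
  - apply/allP => p; rewrite mem_iota add0n => Hp; apply/allP => q.
    rewrite mem_iota add0n => Hq; rewrite !nS //; apply/implyP => /andP [_ /inT [k Hk ->]].
    apply: leq_trans (leq_subr _ _) _; apply: leq_trans (HtM _ Hk) _.
    apply: ltnW; apply: gJ_gt => // k' Hk' i; rewrite sJ => Hi.
    exists (lf i k'); split; first exact: HlL.
    rewrite nJ //; exact: Hlf.
have [k [Hk HS]] := Hcov s (proj2 (XbP b s) (ex_intro _ J HZ)).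
have [_ At] := Hyf k (pickle J); have [HuM Au] := Hyf k M.+1.
have Htk : t k < L by apply: leq_ltn_trans (HtM _ Hk) _; apply: leq_trans HuM _; apply: ltnW; exact: HuL.
have := HS (t k) (u k); rewrite sS => /(_ Htk (HuL _ Hk) (At Hk) (Au Hk)).
rewrite (nS _ Htk) (nS _ (HuL _ Hk)).
have -> : (t k \in T) = true by apply: map_f; rewrite mem_iota.
have -> : (u k \in T) = false.
  apply/negbTE/negP => /inT [k' Hk' E].
  have := HtM _ Hk'; rewrite -E /u; move: HuM; rewrite /u; lia.
done.
Qed.


Lemma R_cont s : cont (fun x => Xb (bx x x) s).
Proof.
apply: (cont2 orb); first exact: cont_const.
apply: cont_has => c; case: (unpickle c) => [J|]; last exact: cont_const.
apply: (cont1 (fun g => inZg g J s)).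
apply: cont_find => k; apply: cont_has => i; apply: cont_all => l.
exact: (cont1 negb (cont_bx _ _ _ _)).
Qed.

Lemma core x : Spl (Xb (bx x x)) <-> U 4 x x.
Proof.
rewrite U4E; split; first exact: split_dir.
move=> [i Hi]; exact: (@cover_dir (bx x x) i Hi).
Qed.

Theorem mainTheorem10 : ~ Pi0 4 Spl.
Proof.
move=> H.
have H1 := Sigma0_pull R_cont H.
have H2 : Sigma0 4 (fun x => ~ U 4 x x).
  apply: (Sigma0_ext H1) => x; rewrite core; tauto.
have [a Ha] := universal H2.
have := Ha a; tauto.
Qed.
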